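(* Let $\mu\in(0,1/2]$, $d=\sqrt{1-3\mu+3\mu^2}$, $\lambda_1=\tfrac32(1-d)$, $\lambda_2=\tfrac32(1+d)$, and consider the system $\ddot x-2\dot y=\Omega_x$, $\ddot y+2\dot x=\Omega_y$, $\ddot z=\Omega_z$ with $\Omega=\tfrac12(\lambda_2x^2+\lambda_1y^2-z^2)+\frac{1}{\sqrt{x^2+y^2+z^2}}$. Then all equilibrium points lie in the plane $z=0$, and there are exactly four of them: $$L_1=(\lambda_2^{-1/3},0,0),\ L_2=(-\lambda_2^{-1/3},0,0),\ L_3=(0,\lambda_1^{-1/3},0),\ L_4=(0,-\lambda_1^{-1/3},0).$$
   Context: Equilibrium points are the critical points of $\Omega$ on $\mathbb{R}^3\setminus\{0\}$ (with zero velocity). *)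

(* Defs.v *)
From Stdlib Require Import Reals.
From Coquelicot Require Import Coquelicot.
Open Scope R_scope.

Definition dpar (mu : R) : R := sqrt (1 - 3 * mu + 3 * mu ^ 2).
Definition lambda1 (mu : R) : R := 3 / 2 * (1 - dpar mu).
Definition lambda2 (mu : R) : R := 3 / 2 * (1 + dpar mu).

Definition Omega (mu x y z : R) : R :=
  1 / 2 * (lambda2 mu * x ^ 2 + lambda1 mu * y ^ 2 - z ^ 2)
  + 1 / sqrt (x ^ 2 + y ^ 2 + z ^ 2).

(* Equilibrium point (zero velocity): a critical point of Omega on R^3 \ {0},
   i.e. all three partial derivatives exist and vanish. *)
Definition equilibrium (mu x y z : R) : Prop :=
  (x, y, z) <> (0, 0, 0) /\
  is_derive (fun t => Omega mu t y z) x 0 /\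
  is_derive (fun t => Omega mu x t z) y 0 /\
  is_derive (fun t => Omega mu x y t) z 0.

(* Main.v *)
Require Import Defs.
From Stdlib Require Import Reals.
From Coquelicot Require Import Coquelicot.
From Stdlib Require Import Lra Psatz.
Open Scope R_scope.

Ltac fin_der x y z :=
  (replace (x * (x * 1) + y * (y * 1) + z * (z * 1)) with (x^2+y^2+z^2) by ring);
  (assert (Hr : 0 < sqrt (x^2+y^2+z^2)) by (apply sqrt_lt_R0; lra));
  (assert (Hs : sqrt (x^2+y^2+z^2) * sqrt (x^2+y^2+z^2) = x^2+y^2+z^2)
     by (apply sqrt_sqrt; lra));
  rewrite Hs; field; lra.

Ltac fin_side :=
  split; [nra | split; [apply Rgt_not_eq, sqrt_lt_R0; nra | tauto]].

Lemma dx mu x y z : x^2+y^2+z^2 > 0 ->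
  is_derive (fun t => Omega mu t y z) x
   (lambda2 mu * x - x / ((x^2+y^2+z^2) * sqrt (x^2+y^2+z^2))).
Proof. intros H. unfold Omega. auto_derive. fin_side. fin_der x y z. Qed.
Lemma dy mu x y z : x^2+y^2+z^2 > 0 ->
  is_derive (fun t => Omega mu x t z) y
   (lambda1 mu * y - y / ((x^2+y^2+z^2) * sqrt (x^2+y^2+z^2))).
Proof. intros H. unfold Omega. auto_derive. fin_side. fin_der x y z. Qed.
Lemma dz mu x y z : x^2+y^2+z^2 > 0 ->
  is_derive (fun t => Omega mu x y t) z
   (- z - z / ((x^2+y^2+z^2) * sqrt (x^2+y^2+z^2))).
Proof. intros H. unfold Omega. auto_derive. fin_side. fin_der x y z. Qed.

Lemma cube_inj u v : 0 < u -> 0 < v -> u*u*u = v*v*v -> u = v.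
Proof. intros. destruct (Rtotal_order u v) as [h|[h|h]]; auto; exfalso.
  - assert (u*u < v*v) by nra. nra.
  - assert (v*v < u*u) by nra. nra. Qed.

Lemma cube_root l : 0 < l -> 0 < Rpower l (-(1/3)) /\
  Rpower l (-(1/3)) * Rpower l (-(1/3)) * Rpower l (-(1/3)) * l = 1.
Proof. intros hl. split. unfold Rpower; apply exp_pos.
  replace (Rpower l (-(1/3)) * Rpower l (-(1/3)) * Rpower l (-(1/3)))
   with (Rpower (Rpower l (-(1/3))) (INR 3)).
  - rewrite Rpower_mult. replace (-(1/3) * INR 3) with (-(1)) by (simpl; field).
    rewrite Rpower_Ropp, Rpower_1 by lra. field. lra.
  - rewrite Rpower_pow by (unfold Rpower; apply exp_pos). simpl. ring.
Qed.

Lemma sqrt_sq a : sqrt (a^2) = Rabs a.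
Proof. replace (a^2) with (Rsqr a) by (unfold Rsqr; ring). apply sqrt_Rsqr_abs. Qed.

Lemma eq_char mu x y z : x^2+y^2+z^2 > 0 -> (equilibrium mu x y z <->
  (lambda2 mu * x - x / ((x^2+y^2+z^2) * sqrt (x^2+y^2+z^2)) = 0 /\
   lambda1 mu * y - y / ((x^2+y^2+z^2) * sqrt (x^2+y^2+z^2)) = 0 /\
   - z - z / ((x^2+y^2+z^2) * sqrt (x^2+y^2+z^2)) = 0)).
Proof. intros HS. split.
  - intros [_ [h1 [h2 h3]]].
    apply is_derive_unique in h1. apply is_derive_unique in h2.
    apply is_derive_unique in h3.
    rewrite (is_derive_unique _ _ _ (dx mu x y z HS)) in h1.
    rewrite (is_derive_unique _ _ _ (dy mu x y z HS)) in h2.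
    rewrite (is_derive_unique _ _ _ (dz mu x y z HS)) in h3. auto.
  - intros [h1 [h2 h3]]. split.
    { intro heq. injection heq. intros. subst. nra. }
    split; [|split].
    + pose proof (dx mu x y z HS) as h. rewrite h1 in h. exact h.
    + pose proof (dy mu x y z HS) as h. rewrite h2 in h. exact h.
    + pose proof (dz mu x y z HS) as h. rewrite h3 in h. exact h.
Qed.

Lemma lam_facts mu : 0 < mu <= 1/2 ->
  0 < lambda1 mu /\ lambda1 mu < lambda2 mu.
Proof. intros hmu. unfold lambda1, lambda2, dpar.
  set (q := 1 - 3 * mu + 3 * mu ^ 2).
  assert (hq : 0 < q) by (unfold q; nra).
  assert (hq1 : q < 1) by (unfold q; nra).
  assert (h1 := sqrt_lt_R0 q hq). assert (h2 := sqrt_sqrt q (Rlt_le _ _ hq)).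
  split; nra.
Qed.

Theorem mainTheorem3 (mu : R) (hmu : 0 < mu <= 1 / 2) :
  (forall x y z : R, equilibrium mu x y z -> z = 0) /\
  (forall x y z : R, equilibrium mu x y z <->
     ((x, y, z) = (Rpower (lambda2 mu) (- (1 / 3)), 0, 0) \/
      (x, y, z) = (- Rpower (lambda2 mu) (- (1 / 3)), 0, 0) \/
      (x, y, z) = (0, Rpower (lambda1 mu) (- (1 / 3)), 0) \/
      (x, y, z) = (0, - Rpower (lambda1 mu) (- (1 / 3)), 0))).
Proof.
  destruct (lam_facts mu hmu) as [hl1 hl12].
  destruct (cube_root (lambda1 mu) hl1) as [ha1 ea1].
  destruct (cube_root (lambda2 mu) ltac:(lra)) as [ha2 ea2].
  set (a1 := Rpower (lambda1 mu) (-(1/3))) in *.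
  set (a2 := Rpower (lambda2 mu) (-(1/3))) in *.
  assert (key : forall x y z, equilibrium mu x y z ->
     z = 0 /\ ((y = 0 /\ (x = a2 \/ x = - a2)) \/ (x = 0 /\ (y = a1 \/ y = - a1)))).
  { intros x y z he.
    assert (HS : x^2+y^2+z^2 > 0).
    { destruct he as [hn _]. destruct (Rle_or_lt (x^2+y^2+z^2) 0) as [h|h]; [|lra].
      exfalso. apply hn. assert (x = 0) by nra. assert (y = 0) by nra.
      assert (z = 0) by nra. subst. reflexivity. }
    apply (eq_char mu x y z HS) in he. destruct he as [e1 [e2 e3]].
    set (S := x^2+y^2+z^2) in *.
    assert (hr := sqrt_lt_R0 S HS). assert (hrr := sqrt_sqrt S (Rlt_le _ _ HS)).
    set (r := sqrt S) in *.
    set (k := 1 / (S * r)).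
    assert (hk : 0 < k) by (unfold k; apply Rdiv_lt_0_compat; [lra| nra]).
    assert (hkS : k * S * r = 1) by (unfold k; field; lra).
    assert (e1' : lambda2 mu * x = x * k) by (unfold k; rewrite <- Rminus_0_r at 1; rewrite <- e1; field; lra).
    assert (e2' : lambda1 mu * y = y * k) by (unfold k; rewrite <- Rminus_0_r at 1; rewrite <- e2; field; lra).
    assert (e3' : - z = z * k) by (unfold k; rewrite <- Rminus_0_r at 1; rewrite <- e3; field; lra).
    assert (hz : z = 0) by nra. split; [exact hz|].
    destruct (Req_dec x 0) as [hx|hx].
    - right. split; [exact hx|].
      assert (hy : y <> 0) by (intro; subst; unfold S in HS; nra).
      assert (hk1 : k = lambda1 mu).
      { apply (Rmult_eq_reg_l y); [nra|auto]. }
      assert (hr' : r = Rabs y) by (unfold r, S; rewrite hx, hz; rewrite <- sqrt_sq; f_equal; ring).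
      assert (hSy : S = Rabs y * Rabs y) by (unfold S; rewrite hx, hz; rewrite <- Rabs_mult; rewrite Rabs_right; [ring| nra]).
      assert (hay : Rabs y = a1).
      { apply cube_inj; [apply Rabs_pos_lt; auto| auto|].
        rewrite hr', hSy, hk1 in hkS. nra. }
      unfold Rabs in hay. destruct (Rcase_abs y); [right|left]; lra.
    - left.
      assert (hk2 : k = lambda2 mu).
      { apply (Rmult_eq_reg_l x); [nra|auto]. }
      assert (hy : y = 0).
      { destruct (Req_dec y 0) as [h|h]; auto. exfalso.
        assert (k = lambda1 mu) by (apply (Rmult_eq_reg_l y); [nra|auto]). lra. }
      split; [exact hy|].
      assert (hr' : r = Rabs x) by (unfold r, S; rewrite hy, hz; rewrite <- sqrt_sq; f_equal; ring).
      assert (hSx : S = Rabs x * Rabs x) by (unfold S; rewrite hy, hz; rewrite <- Rabs_mult; rewrite Rabs_right; [ring| nra]).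
      assert (hax : Rabs x = a2).
      { apply cube_inj; [apply Rabs_pos_lt; auto| auto|].
        rewrite hr', hSx, hk2 in hkS. nra. }
      unfold Rabs in hax. destruct (Rcase_abs x); [right|left]; lra. }
  split.
  - intros x y z he. apply (key x y z he).
  - intros x y z. split.
    + intros he. destruct (key x y z he) as [hz [[hy [hx|hx]]|[hx [hy|hy]]]]; subst;
      [left|right;left|right;right;left|right;right;right]; reflexivity.
    + intros [h|[h|[h|h]]]; injection h; intros; subst;
      (rewrite eq_char; [|nra]);
      rewrite ?sqrt_sq.
      all: assert (L2 : lambda2 mu = 1/(a2*a2*a2)) by (rewrite <- ea2; field; lra).
      all: assert (L1 : lambda1 mu = 1/(a1*a1*a1)) by (rewrite <- ea1; field; lra).
      all: rewrite L1, L2.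
      + replace (a2^2+0^2+0^2) with (a2^2) by ring; rewrite sqrt_sq, Rabs_right by lra.
        repeat split; field; lra.
      + replace ((-a2)^2+0^2+0^2) with (a2^2) by ring; rewrite sqrt_sq, Rabs_right by lra.
        repeat split; field; lra.
      + replace (0^2+a1^2+0^2) with (a1^2) by ring; rewrite sqrt_sq, Rabs_right by lra.
        repeat split; field; lra.
      + replace (0^2+(-a1)^2+0^2) with (a1^2) by ring; rewrite sqrt_sq, Rabs_right by lra.
        repeat split; field; lra.
Qed.
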